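(* Let $0\le\sigma_1<\sigma_2\le1/2$, $0\le\varepsilon_1<\varepsilon_2\le1/2$, $q\in(0,1)$ and $Q=(1-q)\mathrm B(\sigma_1)+q\,\mathrm B(\sigma_2)\in\mathbb B_2^*$. There exists $p\in(0,1)$ such that $W=(1-p)\mathrm B(\varepsilon_1)+p\,\mathrm B(\varepsilon_2)$ is a 4-P-degradation of $Q$ if and only if $$\sigma_1\le\varepsilon_1<(1-q)\sigma_1+q\sigma_2<\varepsilon_2\le\sigma_2 .$$ In that case $p$ is the unique number with $(1-p)\varepsilon_1+p\varepsilon_2=(1-q)\sigma_1+q\sigma_2$.
   Context: A BIDMC $W$ has input uniform on $\{0,1\}$, discrete output alphabet $\mathcal Y$ and transition probabilities $\Pr(y\mid x)$; its LR-profile is $P_W(\varepsilon)=\Pr\big(\mathcal L_W(y)=\varepsilon/(1-\varepsilon)\big)$ with $\mathcal L_W(\hat y)=\Pr(y=\hat y\mid x=0)/\Pr(y=\hat y\mid x=1)$, and $W\cong W'$ if LR-profiles coincide. $W'\preccurlyeq W$ if there is a channel $T$ from the output alphabet of $W$ to that of $W'$ with $\Pr(y'\mid x'=a)=\sum_{y}\Pr(y\mid x=a)T(y'\mid y)$. $\mathrm B(\varepsilon)$ is the BSC with crossover probability $\varepsilon$; $\sum_iq_iW_i$ denotes the random switching channel (use $W_i$ with probability $q_i$ independently of the input and output the index $i$ along with the output). $\mathbb B_n$ is the set of BIDMCs equivalent to $\sum_{i\in[n]}p_i\mathrm B(\varepsilon_i)$ for a probability vector $(p_i)$ and $\varepsilon_i\in[0,1]$;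 $\mathbb B_n^*=\mathbb B_n\setminus\mathbb B_{n-1}$. $P_\epsilon(W)=\frac12\sum_{y}\min\{\Pr(y\mid x=0),\Pr(y\mid x=1)\}$. For a symmetric BIDMC $Q$ and $n\ge1$, $W$ is a $2n$-P-degradation of $Q$ if $W\in\mathbb B_n$, $W\preccurlyeq Q$ and $P_\epsilon(W)=\min\{P_\epsilon(W'):W'\in\mathbb B_n,\ W'\preccurlyeq Q\}$. *)

(* Defs.v *)
From HB Require Import structures.
From mathcomp Require Import all_boot all_order all_algebra.
From mathcomp Require Import reals.
Set Implicit Arguments. Unset Strict Implicit. Unset Printing Implicit Defensive.
Import Order.TTheory GRing.Theory Num.Theory.
Local Open Scope ring_scope.

(* A binary-input channel with finite output alphabet [out]; input 0 is
   [false], input 1 is [true]; [tr x y] = Pr(y | x). *)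
Record chan (R : realType) := Chan { out : finType; tr : bool -> out -> R }.
Arguments out {R} c.
Arguments tr {R} c _ _.

Section Defs.
Variable R : realType.

Definition valid (W : chan R) : Prop :=
  (forall x y, 0 <= tr W x y) /\ (forall x, \sum_(y : out W) tr W x y = 1).

(* LR-profile: P_W(e) = Pr(L_W(y) = e/(1-e)), y the output under uniform input,
   L_W(y) = Pr(y|0)/Pr(y|1); the equation L_W(y) = e/(1-e) is written in
   cross-multiplied form Pr(y|0)(1-e) = Pr(y|1) e (covering L = 0 and L = oo). *)
Definition LRprofile (W : chan R) (e : R) : R :=
  \sum_(y : out W | tr W false y * (1 - e) == tr W true y * e)
     (tr W false y + tr W true y) / 2.

Definition chan_equiv (W W' : chan R) : Prop :=
  forall e, 0 <= e <= 1 -> LRprofile W e = LRprofile W' e.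

Definition degraded (W' W : chan R) : Prop :=
  exists T : out W -> out W' -> R,
    [/\ forall y y', 0 <= T y y',
        forall y, \sum_(y' : out W') T y y' = 1 &
        forall a y', tr W' a y' = \sum_(y : out W) tr W a y * T y y'].

(* Random switching channel  sum_i p_i B(eps_i): output (index, BSC output). *)
Definition bsc_mix (n : nat) (p eps : 'I_n -> R) : chan R :=
  @Chan R (prod (ordinal n) bool)
    (fun x (iy : 'I_n * bool) =>
       p iy.1 * (if x == iy.2 then 1 - eps iy.1 else eps iy.1)).

Definition inB (n : nat) (W : chan R) : Prop :=
  valid W /\
  exists p eps : 'I_n -> R,
    [/\ forall i, 0 <= p i, \sum_i p i = 1,
        forall i, 0 <= eps i <= 1 & chan_equiv W (bsc_mix p eps)].

Definition Perr (W : chan R) : R :=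
  (1 / 2) * \sum_(y : out W) Num.min (tr W false y) (tr W true y).

(* W is a 2n-P-degradation of Q. *)
Definition PDeg (n : nat) (W Q : chan R) : Prop :=
  [/\ inB n W, degraded W Q &
      forall W', inB n W' -> degraded W' Q -> Perr W <= Perr W'].

Definition mix2 (a b t : R) : chan R :=
  @bsc_mix 2 (fun i => if val i == 0%N then 1 - t else t)
             (fun i => if val i == 0%N then a else b).
End Defs.

(* Main.v *)
Require Import Defs.
From HB Require Import structures.
From mathcomp Require Import all_boot all_order all_algebra.
From mathcomp Require Import reals.
From mathcomp Require Import ring lra.
Import Order.TTheory GRing.Theory Num.Theory.
Local Open Scope ring_scope.
Set Implicit Arguments. Unset Strict Implicit.

Section H.
Variable R : realType.

Lemma sum4 (F : 'I_2 * bool -> R) : \sum_y F y =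
  F (ord0,false) + F (ord0,true) + F (ord_max,false) + F (ord_max,true).
Proof.
transitivity (\sum_(p : 'I_2 * bool | xpredT p.1 && xpredT p.2) F (p.1, p.2)).
  by apply: eq_bigr => -[].
rewrite -(pair_big xpredT xpredT (fun i b => F (i, b))) /=.
rewrite !big_ord_recl big_ord0 !big_bool /=.
have -> : lift ord0 ord0 = ord_max :> 'I_2 by apply/val_inj.
rewrite addr0 addrA; ring.
Qed.

Lemma Perr_mix2 (a b t : R) : 0 <= a <= 1/2 -> 0 <= b <= 1/2 -> 0 <= t <= 1 ->
  Perr (mix2 a b t) = (1 - t) * a + t * b.
Proof.
move=> /andP[a0 a1] /andP[b0 b1] /andP[t0 t1].
rewrite /Perr sum4 /=.
rewrite (min_r (x := (1 - t) * (1 - a))); last by nra.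
rewrite (min_l (x := (1 - t) * a)); last by nra.
rewrite (min_r (x := t * (1 - b))); last by nra.
rewrite (min_l (x := t * b)); last by nra.
by field.
Qed.

Lemma valid_mix2 (a b t : R) : 0 <= a <= 1 -> 0 <= b <= 1 -> 0 <= t <= 1 ->
  valid (mix2 a b t).
Proof.
move=> /andP[a0 a1] /andP[b0 b1] /andP[t0 t1]; split.
  move=> x [[[|[|i]] Hi] y] //=; case: x; case: y => /=; nra.
by case; rewrite sum4 /=; ring.
Qed.

Lemma inB_mix2 (a b t : R) : 0 <= a <= 1 -> 0 <= b <= 1 -> 0 <= t <= 1 ->
  inB 2 (mix2 a b t).
Proof.
move=> ha hb ht; split; first exact: valid_mix2.
move: ha hb ht => /andP[a0 a1] /andP[b0 b1] /andP[t0 t1].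
exists (fun i : 'I_2 => if val i == 0%N then 1 - t else t).
exists (fun i : 'I_2 => if val i == 0%N then a else b).
split => //.
- by move=> [[|[|i]] Hi] //=; lra.
- by rewrite big_ord_recl big_ord1 /=; ring.
- by move=> [[|[|i]] Hi] //=; apply/andP; split.
Qed.

Definition mn (W : chan R) y := Num.min (tr W false y) (tr W true y).
Arguments mn : clear implicits.

Lemma dp_pt (W Q : chan R) (T : out Q -> out W -> R) :
  (forall y y', 0 <= T y y') -> (forall y, \sum_y' T y y' = 1) ->
  (forall a y', tr W a y' = \sum_y tr Q a y * T y y') ->
  (forall y', \sum_y mn Q y * T y y' <= mn W y') /\
  \sum_y' \sum_y mn Q y * T y y' = \sum_y mn Q y.
Proof.
move=> T0 T1 TW; split.
  move=> y'; rewrite /mn !TW le_min; apply/andP; split; apply: ler_sum => y _;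
  apply: ler_wpM2r => //; rewrite ge_min lexx ?orbT //.
rewrite exchange_big /=; apply: eq_bigr => y _.
by rewrite -big_distrr /= T1 mulr1.
Qed.

Lemma dp (W Q : chan R) : degraded W Q -> Perr Q <= Perr W.
Proof.
case=> T [T0 T1 TW]; have [H1 H2] := dp_pt T0 T1 TW.
have E : forall (C : chan R), \sum_y Num.min (tr C false y) (tr C true y) = \sum_y mn C y by [].
have h2 : 0 <= 1/2 :> R by lra.
rewrite /Perr ler_wpM2l //.
rewrite -[leLHS]/(\sum_y mn Q y) -[leRHS]/(\sum_y' mn W y') -H2.
by apply: ler_sum => y' _; exact: H1.
Qed.

Lemma dp_eq (W Q : chan R) (T : out Q -> out W -> R) :
  (forall y y', 0 <= T y y') -> (forall y, \sum_y' T y y' = 1) ->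
  (forall a y', tr W a y' = \sum_y tr Q a y * T y y') ->
  Perr W <= Perr Q ->
  forall y', mn W y' = \sum_y mn Q y * T y y'.
Proof.
move=> T0 T1 TW hP; have [H1 H2] := dp_pt T0 T1 TW.
have hs : \sum_y' (mn W y' - \sum_y mn Q y * T y y') = 0.
  apply/eqP; rewrite eq_le; apply/andP; split; last first.
    by apply: sumr_ge0 => y' _; rewrite subr_ge0.
  rewrite sumrB H2 subr_le0.
  have E : forall (C : chan R), \sum_y Num.min (tr C false y) (tr C true y) = \sum_y mn C y by [].
  have h2 : 0 < 1/2 :> R by lra.
  move: hP; rewrite /Perr ler_pM2l //.
move=> y'; apply/eqP; rewrite -subr_eq0; apply/eqP.
by apply: (psumr_eq0P _ hs) => // i _; rewrite subr_ge0.
Qed.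

Lemma Qup (s1 s2 q : R) : 0 <= s1 -> s1 < s2 -> s2 <= 1/2 -> 0 < q -> q < 1 ->
  forall y, mn (mix2 s1 s2 q) y <= s2 * (tr (mix2 s1 s2 q) false y + tr (mix2 s1 s2 q) true y).
Proof.
move=> h1 h2 h3 h4 h5 [[[|[|i]] Hi] b] //=; rewrite /mn /= ge_min; apply/orP;
case: b => /=; first [left; nra | right; nra].
Qed.

Lemma Qlo (s1 s2 q : R) : 0 <= s1 -> s1 < s2 -> s2 <= 1/2 -> 0 < q -> q < 1 ->
  forall y, s1 * (tr (mix2 s1 s2 q) false y + tr (mix2 s1 s2 q) true y) <= tr (mix2 s1 s2 q) true y.
Proof.
move=> h1 h2 h3 h4 h5 [[[|[|i]] Hi] b] //=; case: b => /=; nra.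
Qed.

Lemma deg_refl (W : chan R) : degraded W W.
Proof.
exists (fun y y' => if y == y' then 1 else 0); split.
- by move=> y y'; case: ifP.
- move=> y; rewrite (bigD1 y) //= eqxx big1 ?addr0 // => y' /negbTE.
  by rewrite eq_sym => ->.
- move=> a y'; rewrite (bigD1 y') //= eqxx mulr1 big1 ?addr0 // => y /negbTE ->.
  by rewrite mulr0.
Qed.

Lemma onlyif (s1 s2 e1 e2 q p : R) :
  0 <= s1 -> s1 < s2 -> s2 <= 1 / 2 ->
  0 <= e1 -> e1 < e2 -> e2 <= 1 / 2 ->
  0 < q -> q < 1 -> 0 < p -> p < 1 ->
  PDeg 2 (mix2 e1 e2 p) (mix2 s1 s2 q) ->
  [/\ (1 - p) * e1 + p * e2 = (1 - q) * s1 + q * s2, s1 <= e1 & e2 <= s2].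
Proof.
move=> h1 h2 h3 h4 h5 h6 h7 h8 h9 h10 [_ hdeg hmin].
have PQ : Perr (mix2 s1 s2 q) = (1 - q) * s1 + q * s2.
  by apply: Perr_mix2; apply/andP; split; lra.
have PW : Perr (mix2 e1 e2 p) = (1 - p) * e1 + p * e2.
  by apply: Perr_mix2; apply/andP; split; lra.
have hle : Perr (mix2 e1 e2 p) <= Perr (mix2 s1 s2 q).
  apply: hmin; last exact: deg_refl.
  by apply: inB_mix2; apply/andP; split; lra.
have hge := dp hdeg.
have hm : (1 - p) * e1 + p * e2 = (1 - q) * s1 + q * s2.
  by rewrite -PW -PQ; apply/eqP; rewrite eq_le hle hge.
split => //.
- case: hdeg => T [T0 T1 TW].
  have := TW true (ord0, false); rewrite /= => E.
  have : s1 * (tr (mix2 e1 e2 p) false (ord0, false) + tr (mix2 e1 e2 p) true (ord0, false))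
      <= tr (mix2 e1 e2 p) true (ord0, false).
    rewrite !TW -big_split big_distrr /=; apply: ler_sum => y _.
    rewrite -mulrDl mulrA; apply: ler_wpM2r => //; exact: Qlo.
  rewrite /=; nra.
- case: hdeg => T [T0 T1 TW].
  have E := dp_eq T0 T1 TW hle (ord_max, false).
  have : mn (mix2 e1 e2 p) (ord_max, false)
      <= s2 * (tr (mix2 e1 e2 p) false (ord_max, false) + tr (mix2 e1 e2 p) true (ord_max, false)).
    rewrite E !TW -big_split big_distrr /=; apply: ler_sum => y _.
    rewrite -mulrDl mulrA; apply: ler_wpM2r => //; exact: Qup.
  rewrite /mn /= min_r; last by nra.
  nra.
Qed.

Lemma ifdir (s1 s2 e1 e2 q : R) :
  0 <= s1 -> s1 < s2 -> s2 <= 1 / 2 ->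
  0 <= e1 -> e1 < e2 -> e2 <= 1 / 2 ->
  0 < q -> q < 1 ->
  s1 <= e1 -> e1 < (1 - q) * s1 + q * s2 -> (1 - q) * s1 + q * s2 < e2 -> e2 <= s2 ->
  exists p : R, [/\ 0 < p, p < 1 & PDeg 2 (mix2 e1 e2 p) (mix2 s1 s2 q)].
Proof.
move=> h1 h2 h3 h4 h5 h6 h7 h8 k1 k2 k3 k4.
set m := (1 - q) * s1 + q * s2 in k2 k3 *.
set p := (m - e1) / (e2 - e1).
have de : e2 - e1 != 0 by apply/eqP; lra.
have ds : s2 - s1 != 0 by apply/eqP; lra.
have dq : q != 0 by apply/eqP; lra.
have dq1 : 1 - q != 0 by apply/eqP; lra.
have hp : (1 - p) * e1 + p * e2 = m by rewrite /p; field.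
have p0 : 0 < p by rewrite /p divr_gt0 //; lra.
have p1 : p < 1 by rewrite /p ltr_pdivrMr; lra.
exists p; split => //.
have PQ : Perr (mix2 s1 s2 q) = m.
  by apply: Perr_mix2; apply/andP; split; lra.
have PW : Perr (mix2 e1 e2 p) = m.
  by rewrite -hp; apply: Perr_mix2; apply/andP; split; lra.
split.
- by apply: inB_mix2; apply/andP; split; lra.
- set al := (1 - p) * (s2 - e1) / ((1 - q) * (s2 - s1)).
  set be := (1 - p) * (e1 - s1) / (q * (s2 - s1)).
  have a0 : 0 <= al by rewrite /al divr_ge0 //; apply: mulr_ge0; nra.
  have hmd : m = (1 - q) * s1 + q * s2 by [].
  have pq1 : 0 < (1 - q) * (s2 - s1) by apply: mulr_gt0; lra.
  have pq2 : 0 < q * (s2 - s1) by apply: mulr_gt0; lra.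
  have x1 : 0 <= p * (s2 - e2) by apply: mulr_ge0; lra.
  have x2 : 0 <= p * (e2 - s1) by apply: mulr_ge0; lra.
  have a1 : al <= 1 by rewrite /al ler_pdivrMr // mul1r; nra.
  have b0 : 0 <= be by rewrite /be divr_ge0 //; apply: mulr_ge0; nra.
  have b1 : be <= 1 by rewrite /be ler_pdivrMr // mul1r; nra.
  exists (fun (y : 'I_2 * bool) (y' : 'I_2 * bool) =>
    if y.2 == y'.2 then
      (if val y.1 == 0%N then (if val y'.1 == 0%N then al else 1 - al)
       else (if val y'.1 == 0%N then be else 1 - be)) else 0); split.
  + move=> [[[|[|i]] Hi] b] [[[|[|j]] Hj] b'] //=; case: ifP => _ //; lra.
  + move=> [[[|[|i]] Hi] b] //=; rewrite sum4 /=; case: b => /=; ring.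
  + move=> a [[[|[|j]] Hj] b'] //=; rewrite sum4 /=; case: a; case: b' => /=;
    rewrite /al /be /p /m; field; by rewrite ?mulf_neq0 ?de ?ds ?dq ?dq1.
- move=> W' _ hd; rewrite PW -PQ; exact: dp.
Qed.
End H.

Theorem lemma5 (R : realType) (s1 s2 e1 e2 q : R) :
  0 <= s1 -> s1 < s2 -> s2 <= 1 / 2 ->
  0 <= e1 -> e1 < e2 -> e2 <= 1 / 2 ->
  0 < q -> q < 1 ->
  ((exists p : R, [/\ 0 < p, p < 1 & PDeg 2 (mix2 e1 e2 p) (mix2 s1 s2 q)]) <->
   [/\ s1 <= e1, e1 < (1 - q) * s1 + q * s2,
       (1 - q) * s1 + q * s2 < e2 & e2 <= s2]) /\
  (forall p : R, 0 < p -> p < 1 -> PDeg 2 (mix2 e1 e2 p) (mix2 s1 s2 q) ->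
     (1 - p) * e1 + p * e2 = (1 - q) * s1 + q * s2).
Proof.
move=> h1 h2 h3 h4 h5 h6 h7 h8; split; last first.
  by move=> p p0 p1 hP; case: (onlyif h1 h2 h3 h4 h5 h6 h7 h8 p0 p1 hP).
split.
  move=> [p [p0 p1 hP]]; case: (onlyif h1 h2 h3 h4 h5 h6 h7 h8 p0 p1 hP) => hm k1 k2.
  have x : 0 < p * (e2 - e1) by apply: mulr_gt0; lra.
  split => //; nra.
by case=> k1 k2 k3 k4; apply: ifdir.
Qed.
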